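(* Let $p$ be a prime and $G$ a $p$-group containing a normal abelian subgroup $A$ of finite index. Assume that $A$ contains a $G$-invariant subgroup $C$ such that $A/C$ is a divisible Chernikov group. If $G$ has no proper contranormal subgroups, then $[G,A]\le C$.
   Context: A subgroup $H$ of $G$ is contranormal in $G$ if its normal closure $H^G$ equals $G$; it is proper if $H\ne G$. *)

(* Defs.v *)
(* Possibly infinite groups are not
   available in MathComp, so an abstract group is given as a record with its
   operations and axioms; subgroups are predicates on the carrier. *)
From mathcomp Require Import all_boot.
From Stdlib Require List.

Set Implicit Arguments.
Unset Strict Implicit.
Unset Printing Implicit Defensive.

Record group := Group {
  gcar :> Type;
  gmul : gcar -> gcar -> gcar;
  ginv : gcar -> gcar;
  gone : gcar;
  gmulA : forall x y z, gmul x (gmul y z) = gmul (gmul x y) z;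
  gmul1l : forall x, gmul gone x = x;
  gmulVl : forall x, gmul (ginv x) x = gone }.

Section GroupDefs.
Variable G : group.
Local Notation "x * y" := (gmul x y).
Local Notation "x ^-1" := (ginv x).
Local Notation "1" := (gone G).

Fixpoint gpow (x : G) (n : nat) : G :=
  match n with 0 => 1 | S m => gpow x m * x end.

Definition subgroup (H : G -> Prop) : Prop :=
  [/\ H 1, (forall x y, H x -> H y -> H (x * y)) & (forall x, H x -> H (x^-1))].

Definition normal (H : G -> Prop) : Prop :=
  subgroup H /\ forall x g, H x -> H (g^-1 * x * g).

Definition abelian_sub (H : G -> Prop) : Prop :=
  forall x y, H x -> H y -> x * y = y * x.

Definition finite_index (H : G -> Prop) : Prop :=
  exists s : list G, forall g, exists t, List.In t s /\ H (t^-1 * g).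

Definition p_group (p : nat) : Prop :=
  forall x : G, exists n, gpow x (p ^ n) = 1.

Definition gen (S : G -> Prop) (x : G) : Prop :=
  forall K, subgroup K -> (forall y, S y -> K y) -> K x.

Definition normal_closure (H : G -> Prop) (x : G) : Prop :=
  forall N, normal N -> (forall y, H y -> N y) -> N x.

Definition contranormal (H : G -> Prop) : Prop :=
  subgroup H /\ forall x, normal_closure H x.

Definition proper (H : G -> Prop) : Prop := exists g, ~ H g.

Definition no_proper_contranormal : Prop :=
  forall H, contranormal H -> ~ proper H.

Definition comm (g a : G) : G := g^-1 * a^-1 * g * a.

(* generators of [G, A] *)
Definition comm_set (A : G -> Prop) (x : G) : Prop :=
  exists g a, A a /\ x = comm g a.

Definition quasicyclic_sub (P : G -> Prop) : Prop :=
  subgroup P /\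
  exists q, prime q /\ exists x : nat -> G,
    [/\ forall n, P (x n), x 0 <> 1, gpow (x 0) q = 1,
        (forall n, gpow (x n.+1) q = x n) &
        (forall y, P y -> exists n m, y = gpow (x n) m)].

Fixpoint gprod (xs : nat -> G) (k : nat) : G :=
  match k with 0 => 1 | S m => gprod xs m * xs m end.

Definition direct_product (D : G -> Prop) (k : nat) (P : nat -> G -> Prop) : Prop :=
  [/\ (forall i, i < k -> subgroup (P i)),
      (forall i j x y, i < k -> j < k -> i <> j -> P i x -> P j y -> x * y = y * x),
      (forall x, D x <-> exists xs : nat -> G,
                    (forall i, i < k -> P i (xs i)) /\ x = gprod xs k) &
      (forall xs : nat -> G, (forall i, i < k -> P i (xs i)) ->
                    gprod xs k = 1 -> forall i, i < k -> xs i = 1)].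

Definition chernikov : Prop :=
  exists D : G -> Prop, normal D /\ finite_index D /\
  exists k (P : nat -> G -> Prop),
    (forall i, i < k -> quasicyclic_sub (P i)) /\ direct_product D k P.

Definition divisible : Prop :=
  forall (y : G) n, 0 < n -> exists z, gpow z n = y.

End GroupDefs.

(* A/C (C normal in A, C <= A) is a divisible Chernikov group: A/C is
   isomorphic to a group Q that is divisible and Chernikov, i.e. there is
   a homomorphism from A onto Q with kernel exactly C. *)
Definition quotient_divisible_chernikov (G : group) (A C : G -> Prop) : Prop :=
  exists (Q : group) (f : G -> Q),
    [/\ (forall a b, A a -> A b -> f (gmul a b) = gmul (f a) (f b)),
        (forall y : Q, exists a, A a /\ f a = y),
        (forall a, A a -> (f a = gone Q <-> C a)),
        divisible Q & chernikov Q].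

(* Main.v *)
From HB Require Import structures.
Require Import Defs.
From mathcomp Require Import all_boot.
From Stdlib Require Import ClassicalEpsilon Classical.
From Stdlib Require List.

Set Implicit Arguments.
Unset Strict Implicit.
Unset Printing Implicit Defensive.


Section GB.
Variable G : group.
Local Notation "x * y" := (gmul x y).
Local Notation "x ^-1" := (ginv x).
Local Notation one := (gone G).

Lemma xmulgV (x : G) : x * x^-1 = one.
Proof.
rewrite -[x * x^-1]gmul1l -(gmulVl (x^-1)) -gmulA (gmulA (x^-1)) gmulVl gmul1l.
by rewrite gmulVl.
Qed.
Lemma xmulg1 (x : G) : x * one = x.
Proof. by rewrite -(gmulVl x) gmulA xmulgV gmul1l. Qed.
Lemma xmulKg (x y : G) : x^-1 * (x * y) = y.
Proof. by rewrite gmulA gmulVl gmul1l. Qed.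
Lemma xmulKVg (x y : G) : x * (x^-1 * y) = y.
Proof. by rewrite gmulA xmulgV gmul1l. Qed.
Lemma xmulgK (x y : G) : (y * x) * x^-1 = y.
Proof. by rewrite -gmulA xmulgV xmulg1. Qed.
Lemma xmulgKV (x y : G) : (y * x^-1) * x = y.
Proof. by rewrite -gmulA gmulVl xmulg1. Qed.
Lemma xinv_uniq (x y : G) : x * y = one -> x = y^-1.
Proof. move=> h; have -> : x = (x * y) * y^-1 by rewrite xmulgK.
by rewrite h gmul1l. Qed.
Lemma xinvgK (x : G) : x^-1^-1 = x.
Proof. by symmetry; apply: xinv_uniq; rewrite xmulgV. Qed.
Lemma xinvMg (x y : G) : (x * y)^-1 = y^-1 * x^-1.
Proof. by symmetry; apply: xinv_uniq; rewrite gmulA xmulgKV gmulVl. Qed.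
Lemma xinv1g : one^-1 = one.
Proof. by symmetry; apply: xinv_uniq; rewrite gmul1l. Qed.
Lemma xmulgI (x y z : G) : x * y = x * z -> y = z.
Proof. by move=> h; rewrite -(xmulKg x y) h xmulKg. Qed.
Lemma xmulIg (x y z : G) : y * x = z * x -> y = z.
Proof. by move=> h; rewrite -(xmulgK x y) h xmulgK. Qed.

Lemma gpowS (x : G) n : gpow x n.+1 = gpow x n * x.
Proof. by []. Qed.
Lemma gpow0 (x : G) : gpow x 0 = one.
Proof. by []. Qed.
Lemma gpowD (x : G) m n : gpow x (m + n) = gpow x m * gpow x n.
Proof.
elim: n => [|n IH]; first by rewrite addn0 xmulg1.
by rewrite addnS /= IH gmulA.
Qed.
Lemma gpowM (x : G) m n : gpow x (m * n) = gpow (gpow x m) n.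
Proof.
elim: n => [|n IH]; first by rewrite muln0.
by rewrite mulnS addnC gpowD IH.
Qed.
Lemma gpowC (x : G) n : x * gpow x n = gpow x n * x.
Proof.
elim: n => [|n IH]; first by rewrite /= gmul1l xmulg1.
by rewrite /= gmulA IH.
Qed.
Lemma gpow1 n : gpow one n = one.
Proof. by elim: n => [|n IH] //=; rewrite IH gmul1l. Qed.

Lemma sub_mul (H : G -> Prop) (x y : G) : subgroup H -> H x -> H y -> H (x * y).
Proof. by case=> _ h _; apply: h. Qed.
Lemma sub_inv (H : G -> Prop) (x : G) : subgroup H -> H x -> H (x^-1).
Proof. by case=> _ _ h; apply: h. Qed.
Lemma sub_one (H : G -> Prop) : subgroup H -> H one.
Proof. by case. Qed.
Lemma sub_pow (H : G -> Prop) (x : G) n : subgroup H -> H x -> H (gpow x n).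
Proof. move=> sH hx; elim: n => [|n IH] /=; [exact: sub_one | exact: sub_mul]. Qed.

End GB.



Section Ab.
Variable Q : group.
Hypothesis QC : forall x y : Q, gmul x y = gmul y x.
Local Notation "x * y" := (gmul x y).
Local Notation "x ^-1" := (ginv x).
Local Notation one := (gone Q).

Lemma qm1 : left_id one (@gmul Q). Proof. exact: gmul1l. Qed.
Lemma qmA : associative (@gmul Q). Proof. move=> x y z; exact: gmulA. Qed.
HB.instance Definition _ := Monoid.isComLaw.Build Q one (@gmul Q) qmA QC qm1.

Lemma xmulCA (x y z : Q) : x * (y * z) = y * (x * z).
Proof. by rewrite !gmulA (QC x y). Qed.
Lemma xmulAC (x y z : Q) : (x * y) * z = (x * z) * y.
Proof. by rewrite -!gmulA (QC y z). Qed.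
Lemma xmulACA (x y z w : Q) : (x * y) * (z * w) = (x * z) * (y * w).
Proof. by rewrite -!gmulA (xmulCA y). Qed.
Lemma xinvM_ab (x y : Q) : (x * y)^-1 = x^-1 * y^-1.
Proof. by rewrite xinvMg QC. Qed.
Lemma gpowMn (x y : Q) n : gpow (x * y) n = gpow x n * gpow y n.
Proof.
elim: n => [|n IH] /=; first by rewrite gmul1l.
by rewrite IH xmulACA.
Qed.
Lemma gpowV (x : Q) n : gpow (x^-1) n = (gpow x n)^-1.
Proof.
elim: n => [|n IH] /=; first by rewrite xinv1g.
by rewrite IH xinvM_ab.
Qed.

Lemma big_gpow m (x : Q) : \big[@gmul Q/one]_(i < m) x = gpow x m.
Proof.
elim: m => [|m IH]; first by rewrite big_ord0.
by rewrite big_ord_recr /= IH.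
Qed.

Lemma big_reindex m (F : 'I_m -> Q) (h : 'I_m -> 'I_m) : injective h ->
  \big[@gmul Q/one]_(i < m) F (h i) = \big[@gmul Q/one]_(i < m) F i.
Proof. move=> hi; exact: (esym (reindex_inj hi)). Qed.

Lemma big_splitQ m (F1 F2 : 'I_m -> Q) :
  \big[@gmul Q/one]_(i < m) (F1 i * F2 i) =
  \big[@gmul Q/one]_(i < m) F1 i * \big[@gmul Q/one]_(i < m) F2 i.
Proof. exact: big_split. Qed.

Lemma big_homQ m (F : 'I_m -> Q) (phi : Q -> Q) :
  phi one = one -> (forall x y, phi (x * y) = phi x * phi y) ->
  phi (\big[@gmul Q/one]_(i < m) F i) = \big[@gmul Q/one]_(i < m) phi (F i).
Proof.
move=> h1 hM.
elim: m F => [|m IH] F; first by rewrite !big_ord0.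
by rewrite !big_ord_recr /= hM IH.
Qed.

Lemma big_indQ m (F : 'I_m -> Q) (P : Q -> Prop) :
  P one -> (forall x y, P x -> P y -> P (x * y)) -> (forall i, P (F i)) ->
  P (\big[@gmul Q/one]_(i < m) F i).
Proof.
move=> h1 hM hF.
elim: m F hF => [|m IH] F hF; first by rewrite big_ord0.
by rewrite big_ord_recr /=; apply: hM; [apply: IH => i|].
Qed.

End Ab.



Section Dedup.
Variable G : group.
Local Notation "x * y" := (gmul x y).
Local Notation "x ^-1" := (ginv x).
Local Notation one := (gone G).
Variable A : G -> Prop.
Hypothesis sA : subgroup A.

Lemma dedup (s : list G) : exists m (t : nat -> G),
  (forall x, List.In x s -> exists i, i < m /\ A ((t i)^-1 * x)) /\
  (forall i j, i < m -> j < m -> A ((t i)^-1 * t j) -> i = j).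
Proof.
elim: s => [|x s [m [t [Hc Hd]]]].
  exists 0, (fun _ => one); split => [y []|i j]; by [].
case: (classic (exists i, i < m /\ A ((t i)^-1 * x))) => [hx|hx].
  exists m, t; split => // y [<-|hy]; [exact: hx | exact: Hc].
exists m.+1, (fun i => if i == m then x else t i); split.
  move=> y [<-|hy].
    by exists m; rewrite eqxx; split => //; rewrite gmulVl; apply: sub_one.
  have [i [him hi]] := Hc y hy.
  exists i; split; first by apply: ltnW.
  by have -> : (i == m) = false by apply/eqP => e; rewrite e ltnn in him.
move=> i j; rewrite ltnS leq_eqVlt => hi; rewrite ltnS leq_eqVlt => hj; move: hi hj.
have inv_sw : forall u v : G, A (u^-1 * v) -> A (v^-1 * u).
  move=> u v h; have := sub_inv sA h; by rewrite xinvMg xinvgK.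
case/orP => [/eqP ei|lti]; case/orP => [/eqP ej|ltj].
- by rewrite ei ej.
- rewrite ei eqxx.
  have -> : (j == m) = false by apply/eqP => e; rewrite e ltnn in ltj.
  move=> h; exfalso; apply: hx; exists j; split => //; exact: inv_sw.
- rewrite ej eqxx.
  have -> : (i == m) = false by apply/eqP => e; rewrite e ltnn in lti.
  move=> h; exfalso; apply: hx; exists i; split => //.
- have -> : (i == m) = false by apply/eqP => e; rewrite e ltnn in lti.
  have -> : (j == m) = false by apply/eqP => e; rewrite e ltnn in ltj.
  exact: Hd.
Qed.

End Dedup.

Lemma bound_fin (P : nat -> nat -> Prop) m :
  (forall i E E', E <= E' -> P i E -> P i E') ->
  (forall i, i < m -> exists E, P i E) -> exists E, forall i, i < m -> P i E.
Proof.
move=> mono; elim: m => [|m IH] h; first by exists 0.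
have [E1 h1] := IH (fun i hi => h i (ltnW hi)).
have [E2 h2] := h m (ltnSn m).
exists (maxn E1 E2) => i; rewrite ltnS leq_eqVlt; case/orP => [/eqP ->|hi].
  by apply: mono h2; apply: leq_maxr.
by apply: mono (h1 i hi); apply: leq_maxl.
Qed.



Section Main.
Variables (p : nat) (G : group) (A C : G -> Prop) (Q : group) (f : G -> Q).
Local Notation "x * y" := (gmul x y).
Local Notation "x ^-1" := (ginv x).
Local Notation oneG := (gone G).
Local Notation oneQ := (gone Q).
Hypotheses (pp : prime p) (pg : p_group G p) (nA : normal A)
  (abA : abelian_sub A) (nC : normal C) (CA : forall c, C c -> A c)
  (fM : forall a b, A a -> A b -> f (a * b) = f a * f b)
  (fS : forall y : Q, exists a, A a /\ f a = y)
  (fK : forall a, A a -> (f a = oneQ <-> C a))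
  (Qd : divisible Q).

Let sA : subgroup A := nA.1.
Let sC : subgroup C := nC.1.
Lemma conjA x g : A x -> A (g^-1 * x * g). Proof. exact: nA.2. Qed.
Lemma conjC x g : C x -> C (g^-1 * x * g). Proof. exact: nC.2. Qed.

Lemma QC (x y : Q) : x * y = y * x.
Proof.
have [a [ha <-]] := fS x; have [b [hb <-]] := fS y.
by rewrite -!fM // abA.
Qed.

Lemma f1 : f oneG = oneQ.
Proof.
have h := fM (sub_one sA) (sub_one sA); rewrite gmul1l in h.
by apply: (@xmulgI _ (f oneG)); rewrite -h xmulg1.
Qed.

Lemma fV a : A a -> f (a^-1) = (f a)^-1.
Proof.
move=> ha; apply: xinv_uniq; rewrite -fM //; last exact: sub_inv.
by rewrite gmulVl f1.
Qed.

Lemma fpow a n : A a -> f (gpow a n) = gpow (f a) n.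
Proof.
move=> ha; elim: n => [|n IH] /=; first exact: f1.
by rewrite fM // ?IH //; apply: sub_pow.
Qed.

Definition pick (q : Q) : G := proj1_sig (constructive_indefinite_description _ (fS q)).
Lemma pickA q : A (pick q).
Proof. by rewrite /pick; case: constructive_indefinite_description => x [] /=. Qed.
Lemma pickE q : f (pick q) = q.
Proof. by rewrite /pick; case: constructive_indefinite_description => x [] /=. Qed.

Lemma fC_eq a b : A a -> A b -> f a = f b -> C (a^-1 * b).
Proof.
move=> ha hb e; apply/fK; first by apply: sub_mul => //; apply: sub_inv.
by rewrite fM ?fV ?e ?gmulVl //; apply: sub_inv.
Qed.

Definition act (g : G) (q : Q) : Q := f (g^-1 * pick q * g).

Lemma actE g a : A a -> act g (f a) = f (g^-1 * a * g).
Proof.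
move=> ha; rewrite /act.
set b := pick (f a).
have hb : A b := pickA _.
have hc : C (a^-1 * b) by apply: fC_eq => //; rewrite pickE.
have hc' := conjC g hc.
have -> : g^-1 * b * g = (g^-1 * a * g) * (g^-1 * (a^-1 * b) * g).
  by rewrite !gmulA xmulgK xmulgK.
rewrite fM; [|exact: conjA|exact: CA].
by have := (fK (CA hc')).2 hc' => ->; rewrite xmulg1.
Qed.

Lemma act_mul g x y : act g (x * y) = act g x * act g y.
Proof.
have ha := pickA x; have hb := pickA y.
rewrite -(pickE x) -(pickE y) -fM //.
rewrite (actE _ (sub_mul sA ha hb)) (actE _ ha) (actE _ hb).
rewrite -fM; try by apply: conjA.
by congr f; rewrite !gmulA xmulgK.
Qed.

Lemma act_comp g h q : act (g * h) q = act h (act g q).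
Proof.
have ha := pickA q.
rewrite -(pickE q) (actE _ ha) (actE _ ha) (actE _ (conjA g ha)).
by congr f; rewrite xinvMg !gmulA.
Qed.

Lemma act_A b q : A b -> act b q = q.
Proof.
move=> hb; rewrite -(pickE q) (actE _ (pickA q)).
by rewrite -gmulA (abA (pickA q) hb) gmulA gmulVl gmul1l.
Qed.

Lemma act1 g : act g oneQ = oneQ.
Proof.
apply: (@xmulgI _ (act g oneQ)); by rewrite -act_mul !xmulg1.
Qed.

Lemma act_inv g q : act g (q^-1) = (act g q)^-1.
Proof. by apply: xinv_uniq; rewrite -act_mul gmulVl act1. Qed.

Lemma act_pow g q n : act g (gpow q n) = gpow (act g q) n.
Proof. elim: n => [|n IH] /=; [exact: act1 | by rewrite act_mul IH]. Qed.

Lemma act_rep g a q : A a -> act (g * a) q = act g q.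
Proof. by move=> ha; rewrite act_comp act_A. Qed.

Lemma act_one q : act oneG q = q.
Proof. exact: act_A (sub_one sA). Qed.


Definition delta g q := act g q * q^-1.

Inductive K : Q -> Prop :=
| K1 : K oneQ
| Kd g q : K (delta g q)
| KM x y : K x -> K y -> K (x * y).

Inductive K2 : Q -> Prop :=
| K21 : K2 oneQ
| K2d g q : K q -> K2 (delta g q)
| K2M x y : K2 x -> K2 y -> K2 (x * y).

Lemma delta_mul g x y : delta g (x * y) = delta g x * delta g y.
Proof. by rewrite /delta act_mul (xinvM_ab QC) (xmulACA QC). Qed.
Lemma delta_inv g x : delta g (x^-1) = (delta g x)^-1.
Proof. by rewrite /delta act_inv (xinvM_ab QC). Qed.
Lemma delta_pow g x n : delta g (gpow x n) = gpow (delta g x) n.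
Proof. by rewrite /delta act_pow (gpowMn QC) (gpowV QC). Qed.
Lemma act_delta g x : act g x = delta g x * x.
Proof. by rewrite /delta xmulgKV. Qed.
Lemma delta_comp g h x : delta (g * h) x = delta h (act g x) * delta g x.
Proof. by rewrite /delta act_comp !gmulA xmulgKV. Qed.
Lemma delta_oneG x : delta oneG x = oneQ.
Proof. by rewrite /delta act_one xmulgV. Qed.
Lemma delta_rep g a x : A a -> delta (g * a) x = delta g x.
Proof. by move=> ha; rewrite /delta act_rep. Qed.

Lemma KV x : K x -> K (x^-1).
Proof.
elim => [|g q|a b _ ha _ hb].
- by rewrite xinv1g; apply: K1.
- by rewrite -delta_inv; apply: Kd.
- by rewrite (xinvM_ab QC); apply: KM.
Qed.

Lemma ab_eq1 (a b c d : Q) : a * b * c = (d * a * c) * (d^-1 * b).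
Proof.
by rewrite (xmulACA QC) (QC d a) xmulgK (QC c b) gmulA.
Qed.

Lemma step1 q : K q -> K2 q.
Proof.
elim => [|g q0|x y _ hx _ hy]; [exact: K21| |exact: K2M].
have [n hn] := pg g.
set N := p ^ n.
have N0 : 0 < N by rewrite /N expn_gt0 prime_gt0.
have [r hr] := Qd q0 N0.
set w := delta g r.
have hw : K (w^-1) by apply: (KV); apply: Kd.
have claim : forall k, exists k2, K2 k2 /\ gpow w k = delta (gpow g k) r * k2.
  elim => [|k [k2 [hk2 e]]].
    by exists oneQ; split; [exact: K21 | rewrite /= delta_oneG gmul1l].
  exists (delta (gpow g k) (w^-1) * k2); split; first by apply: K2M => //; apply: K2d.
  rewrite /= e -(gpowC g k) delta_comp act_delta delta_mul delta_inv.
  exact: ab_eq1.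
have [k2 [hk2 e]] := claim N.
by rewrite -hr delta_pow e hn delta_oneG gmul1l.
Qed.

Definition Zfix (z : Q) := forall g, act g z = z.

Lemma step2 m (t : nat -> G)
  (cov : forall g, exists i, i < m /\ A ((t i)^-1 * g))
  (dist : forall i j, i < m -> j < m -> A ((t i)^-1 * t j) -> i = j) q :
  exists z k, Zfix z /\ K k /\ q = z * k.
Proof.
have m0 : 0 < m by have [i [hi _]] := cov oneG; apply: leq_ltn_trans hi.
have [r hr] := Qd q m0.
pose c (i : 'I_m) := delta (t i) r.
pose s := \big[@gmul Q/oneQ]_(i < m) c i.
have Ks : K s by apply: (big_indQ QC (P := K)); [exact: K1 | exact: KM | move=> i; exact: Kd].
exists (q * s), (s^-1); split; last by split; [exact: (KV) | rewrite xmulgK].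
move=> x.
have H : forall i : 'I_m, exists k : 'I_m, A ((t k)^-1 * (t i * x)).
  move=> i; have [k [hk hA]] := cov (t i * x); by exists (Ordinal hk).
pose rho i := proj1_sig (constructive_indefinite_description _ (H i)).
have hrho : forall i, A ((t (rho i))^-1 * (t i * x)).
  by move=> i; rewrite /rho; case: constructive_indefinite_description.
have rinj : injective rho.
  move=> i j e.
  have hi := hrho i; have hj := hrho j; rewrite e in hi.
  set k := rho j in hi hj.
  have h1 := sub_mul sA hi (sub_inv sA hj).
  have h2 := conjA (t k)^-1 h1.
  have e2 : (t k)^-1^-1 * ((t k)^-1 * (t i * x) * ((t k)^-1 * (t j * x))^-1) * (t k)^-1
           = t i * (t j)^-1.
    by rewrite !xinvMg !xinvgK !gmulA xmulgV gmul1l !xmulgK.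
  rewrite e2 in h2.
  have h3 := conjA (t j) h2.
  have e3 : (t j)^-1 * (t i * (t j)^-1) * t j = (t j)^-1 * t i.
    by rewrite !gmulA xmulgKV.
  rewrite e3 in h3.
  by apply: val_inj; symmetry; apply: dist; rewrite ?ltn_ord.
have crho : forall i, c (rho i) = act x (c i) * delta x r.
  move=> i; rewrite /c -(delta_rep (t (rho i)) r (hrho i)) xmulKVg.
  rewrite delta_comp act_delta delta_mul act_delta.
  rewrite -(gmulA (delta x (delta (t i) r))) (QC (delta x r)) gmulA.
  by rewrite /delta xmulgKV.
have es : s = act x s * gpow (delta x r) m.
  rewrite {1}/s -(big_reindex QC c rinj).
  under eq_bigr => i _ do rewrite crho.
  rewrite (big_splitQ QC) (big_gpow QC) -(big_homQ QC) //; [exact: act1|exact: act_mul].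
rewrite act_mul act_delta -hr delta_pow {2}es.
by rewrite (QC (gpow (delta x r) m)) -gmulA (QC (act x s)).
Qed.

Definition bnd E (q : Q) := gpow q (p ^ E) = oneQ.

Lemma bnd_mono E E' q : E <= E' -> bnd E q -> bnd E' q.
Proof.
move=> le h; rewrite /bnd -(subnKC le) expnD gpowM h; exact: gpow1.
Qed.

Lemma bnd_all q : exists E, bnd E q.
Proof.
have [a [ha <-]] := fS q; have [n hn] := pg a.
by exists n; rewrite /bnd -fpow // hn f1.
Qed.

Lemma bnd_fin1 m (F : nat -> Q) : exists E, forall i, i < m -> bnd E (F i).
Proof.
apply: (bound_fin (P := fun i E => bnd E (F i))).
  by move=> i E E' le; apply: bnd_mono.
by move=> i _; apply: bnd_all.
Qed.

Lemma bnd_fin2 m (F : nat -> nat -> Q) :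
  exists E, forall i j, i < m -> j < m -> bnd E (F i j).
Proof.
have [E hE] := bound_fin (m := m) (P := fun i E => forall j, j < m -> bnd E (F i j))
  (fun i E E' le h j hj => bnd_mono le (h j hj)) (fun i _ => bnd_fin1 m (F i)).
by exists E => i j hi hj; apply: hE.
Qed.

Lemma bnd_fin3 m (F : nat -> nat -> nat -> Q) :
  exists E, forall i j k, i < m -> j < m -> k < m -> bnd E (F i j k).
Proof.
have [E hE] := bound_fin (m := m) (P := fun i E => forall j k, j < m -> k < m -> bnd E (F i j k))
  (fun i E E' le h j k hj hk => bnd_mono le (h j k hj hk)) (fun i _ => bnd_fin2 m (F i)).
by exists E => i j k hi hj hk; apply: hE.
Qed.

Lemma main_K (fiA : finite_index A) (hnc : no_proper_contranormal G) :
  forall k, K k -> k = oneQ.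
Proof.
have [s hs] := fiA.
have [m [t [Hc Hd]]] := dedup sA s.
have cov : forall g, exists i, i < m /\ A ((t i)^-1 * g).
  move=> g; have [x [hx ha]] := hs g; have [i [hi hi']] := Hc x hx.
  exists i; split => //.
  by have := sub_mul sA hi' ha; rewrite -gmulA xmulKVg.
have [E1 B1] := bnd_fin3 m (fun i j k => f ((t k)^-1 * (t i * t j))).
have [E2 B3] := bnd_fin2 m (fun k i => f ((t k)^-1 * t i)).
have [E3 B2] := bnd_fin1 m (fun k => f ((t k)^-1)).
set E := maxn E1 (maxn E2 E3).
have le1 : E1 <= E by apply: leq_maxl.
have le2 : E2 <= E by rewrite /E (leq_trans _ (leq_maxr _ _)) // leq_maxl.
have le3 : E3 <= E by rewrite /E (leq_trans _ (leq_maxr _ _)) // leq_maxr.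
pose W q := exists z u, Zfix z /\ bnd E u /\ q = z * u.
have W_mul : forall x y, W x -> W y -> W (x * y).
  move=> x y [z [u [hz [hu ->]]]] [z' [u' [hz' [hu' ->]]]].
  exists (z * z'), (u * u'); split; last split.
  - by move=> g; rewrite act_mul hz hz'.
  - by rewrite /bnd (gpowMn QC) hu hu' gmul1l.
  - exact: (xmulACA QC).
have Z1 : Zfix oneQ by move=> g; exact: act1.
have W_bnd : forall u, bnd E u -> W u.
  by move=> u hu; exists oneQ, u; split => //; split => //; rewrite gmul1l.
have W_Z : forall z, Zfix z -> W z.
  move=> z hz; exists z, oneQ; split => //; split; last by rewrite xmulg1.
  by rewrite /bnd gpow1.
have W_inv : forall x, W x -> W (x^-1).
  move=> x [z [u [hz [hu ->]]]]; exists z^-1, u^-1; split; last split.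
  - by move=> g; rewrite act_inv hz.
  - by rewrite /bnd (gpowV QC) hu xinv1g.
  - exact: (xinvM_ab QC).
have W_act : forall g x, W x -> W (act g x).
  move=> g x [z [u [hz [hu ->]]]]; exists z, (act g u); split => //; split.
  - by rewrite /bnd -act_pow hu act1.
  - by rewrite act_mul hz.
have b1 : forall i j k, i < m -> j < m -> k < m -> W (f ((t k)^-1 * (t i * t j))).
  move=> i j k hi hj hk; apply: (W_bnd); apply: bnd_mono le1 _; exact: B1.
have b3 : forall k i, k < m -> i < m -> W (f ((t k)^-1 * t i)).
  move=> k i hk hi; apply: (W_bnd); apply: bnd_mono le2 _; exact: B3.
have b2 : forall k, k < m -> W (f ((t k)^-1)).
  move=> k hk; apply: (W_bnd); apply: bnd_mono le3 _; exact: B2.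
pose H x := forall k, k < m -> A ((t k)^-1 * x) -> W (f ((t k)^-1 * x)).
have Atk : forall k y, A y -> A ((t k)^-1 * y) -> A ((t k)^-1).
  move=> k y hy h; have := sub_mul sA h (sub_inv sA hy); by rewrite xmulgK.
have H_A : forall y, A y -> W (f y) -> H y.
  move=> y hy hw k hk h.
  have hk' := Atk k y hy h.
  by rewrite fM //; apply: (W_mul) => //; apply: (b2).
have H1 : H oneG.
  by move=> k hk; rewrite xmulg1 => _; apply: (b2).
have H_mul : forall x y, H x -> H y -> H (x * y).
  move=> x y hx hy k hk hxy.
  have [i [hi ha]] := cov x; have [j [hj hb]] := cov y.
  set a := (t i)^-1 * x in ha; set b := (t j)^-1 * y in hb.
  set c := (t k)^-1 * (t i * t j).
  have e1 : (t k)^-1 * (x * y) = c * (((t j)^-1 * a * t j) * b).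
    by rewrite /c /a /b !gmulA !xmulgK.
  have hw : A (((t j)^-1 * a * t j) * b) by apply: sub_mul => //; apply: conjA.
  have hc : A c.
    have := sub_mul sA hxy (sub_inv sA hw); by rewrite e1 xmulgK.
  rewrite e1 fM // fM //; last by apply: conjA.
  apply: (W_mul); first exact: (b1).
  apply: (W_mul); last exact: (hy).
  rewrite -actE //; apply: (W_act); exact: (hx).
have H_pow : forall x n, H x -> H (gpow x n).
  move=> x n hx; elim: n => [|n IH] /=; [exact: (H1) | exact: (H_mul)].
have sH : subgroup H.
  split => // x hx.
  have [n hn] := pg x.
  have pn : 0 < p ^ n by rewrite expn_gt0 prime_gt0.
  have e : gpow x (p ^ n).-1 = x^-1.
    apply: xinv_uniq; by rewrite -gpowS prednK.
  by rewrite -e; apply: (H_pow).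
have Ht : forall i, i < m -> H (t i).
  by move=> i hi k hk _; apply: (b3).
have HC : forall c, C c -> H c.
  move=> c hc; apply: (H_A); first exact: CA.
  have -> : f c = oneQ by apply/(fK (CA hc)).
  by apply: (W_Z).
have HZ : forall a, A a -> Zfix (f a) -> H a.
  by move=> a ha hz; apply: (H_A) => //; apply: (W_Z).
have cn : contranormal H.
  split => // x N nN HN.
  have sN : subgroup N := nN.1.
  have [i [hi ha]] := cov x.
  have -> : x = t i * ((t i)^-1 * x) by rewrite xmulKVg.
  apply: sub_mul => //; first by apply: (HN); apply: (Ht).
  set a := (t i)^-1 * x in ha *.
  have [z [k [hz [hk e]]]] := step2 cov Hd (f a).
  have Kb : forall k, K k -> exists b, [/\ A b, N b & f b = k].
    move=> kk; elim => [|g q|k1 k2 _ [b1' [hb1 hn1 e1]] _ [b2' [hb2 hn2 e2]]].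
    - by exists oneG; split; [exact: (sub_one sA) | exact: (sub_one sN) | exact: f1].
    - have [j [hj hja]] := cov g.
      have eg : g = t j * ((t j)^-1 * g) by rewrite xmulKVg.
      set b0 := pick q.
      have hb0 : A b0 := pickA q.
      exists (b0^-1 * ((t j)^-1 * b0 * t j)); split.
      + by apply: (sub_mul sA); [apply: (sub_inv sA) | apply: conjA].
      + rewrite !gmulA; apply: (sub_mul sN); last by apply: (HN); apply: (Ht).
        by apply: nN.2; apply: (sub_inv sN); apply: (HN); apply: (Ht).
      + rewrite fM; [|exact: (sub_inv sA)|exact: conjA].
        rewrite fV // -actE // pickE QC /delta eg act_rep //.
    - by exists (b1' * b2'); split; [exact: (sub_mul sA) | exact: (sub_mul sN) | rewrite fM // e1 e2].
  have [b [hb hbN hfb]] := Kb k hk.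
  have hz' : A (pick z) := pickA z.
  have eab : f a = f (pick z * b) by rewrite fM // pickE hfb.
  have hab : A (pick z * b) by exact: sub_mul.
  have hC := fC_eq hab ha (esym eab).
  have -> : a = (pick z * b) * ((pick z * b)^-1 * a) by rewrite xmulKVg.
  apply: (sub_mul sN); last by apply: (HN); apply: (HC).
  apply: (sub_mul sN) => //; apply: (HN); apply: (HZ) => //; by rewrite pickE.
have allH : forall g, H g.
  move=> g; apply: NNPP => ng; exact: (hnc H cn (ex_intro _ g ng)).
have allW : forall q, W q.
  move=> q; have [a [ha <-]] := fS q.
  have [k0 [hk0 hka]] := cov a.
  have hk' := Atk k0 a ha hka.
  have e : f a = (f ((t k0)^-1))^-1 * f ((t k0)^-1 * a) by rewrite fM // xmulKg.
  rewrite e; apply: (W_mul); [apply: (W_inv); exact: (b2) | exact: allH].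
have KZ : forall q, Zfix q.
  move=> q.
  have pE : 0 < p ^ E by rewrite expn_gt0 prime_gt0.
  have [r hr] := Qd q pE.
  have [z [u [hz [hu er]]]] := allW r.
  rewrite -hr er (gpowMn QC) hu xmulg1 => g.
  by rewrite act_pow hz.
move=> k /step1; elim => [//|g q _|x y _ -> _ ->]; last exact: gmul1l.
by rewrite /delta KZ xmulgV.
Qed.

Lemma final (fiA : finite_index A) (hnc : no_proper_contranormal G) x :
  gen (comm_set A) x -> C x.
Proof.
move=> hx; apply: hx; first exact: sC.
move=> y [g [a [ha ->]]].
have hai := sub_inv sA ha.
have hc : A (g^-1 * a^-1 * g) := conjA g hai.
have hy : A (g^-1 * a^-1 * g * a) := sub_mul sA hc ha.
apply/(fK hy).
rewrite /comm fM // -actE // fV // act_inv.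
have := main_K fiA hnc (Kd g (f a)); rewrite /delta => e.
have e' : act g (f a) = f a.
  by apply: (@xmulIg _ ((f a)^-1)); rewrite e xmulgV.
by rewrite e' gmulVl.
Qed.

End Main.



Unset Implicit Arguments.

Theorem lemma2p6 (p : nat) (G : group) (A C : G -> Prop) :
  prime p -> p_group G p ->
  normal A -> abelian_sub A -> finite_index A ->
  normal C -> (forall c, C c -> A c) ->
  quotient_divisible_chernikov A C ->
  no_proper_contranormal G ->
  forall x, gen (comm_set A) x -> C x.
Proof.
move=> pp pg nA abA fiA nC CA [Q [f [fM fS fK Qd _]]] hnc x hx.
exact: (final pp pg nA abA nC CA fM fS fK Qd fiA hnc hx).
Qed.
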